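(* Assume (H0)–(H2), (B1) and (B2) for the family of planar viscous shocks $\bar u^\varepsilon$ described in the context, and let $\lambda_*^\varepsilon(\tilde\xi)$ be the family of Evans-function roots with expansion $\lambda_*^\varepsilon(\tilde\xi)=i\tilde\xi\tau_*(\varepsilon)-\tilde\xi^2\beta(\varepsilon)+\delta(\varepsilon)\tilde\xi^3+r(\varepsilon,\tilde\xi)\tilde\xi^4$, $r\in C^1$. Then there is a unique $C^1$ function $\mathcal E$, defined for $\tilde\xi$ near $0$, with $\mathcal E(0)=0$, such that for $\varepsilon$ and $\tilde\xi\neq 0$ sufficiently small, $\mathrm{Re}\,\lambda_*^\varepsilon(\tilde\xi)=0$ if and only if $\varepsilon=\mathcal E(\tilde\xi)$. Moreover, in the generic case $\mathrm{Re}\,\delta(0)\ne0$, $$\mathcal E(\tilde\xi)\sim\frac{\mathrm{Re}\,\delta(0)}{\partial_\varepsilon\mathrm{Re}\,\beta(0)}\,\tilde\xi\quad\text{as }\tilde\xi\to0.$$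
   Context: Setting: a smooth family of systems $u_t=\Delta_xu-\sum_{j=1}^2F^j(\varepsilon,u)_{x_j}$, $u\in\mathbb R^n$, $x\in\mathbb R^2$, with standing planar viscous shocks $\bar u^\varepsilon(x_1)\to u_\pm(\varepsilon)$ solving $u'=F^1(\varepsilon,u)-F^1(\varepsilon,u_-)$; $A^j_\pm:=\partial_uF^j(\varepsilon,u_\pm)$. (H0): $F^j\in C^k$, $k\ge2$. (H1): $A^1_\pm$ have real distinct nonzero eigenvalues and $\xi_1A^1_\pm+\xi_2A^2_\pm$ is real-semisimple for $\xi\in\mathbb R^2$. (H2): $\bar u^\varepsilon$ is a transverse connecting orbit of the profile ODE, unique up to translation, with $\dim S(A^1_+)+\dim U(A^1_-)=n+1$ (so $A^1_-$ has $c-1$ negative, $A^1_+$ has $n-c$ positive eigenvalues). Lopatinski determinant: $\Delta^\varepsilon(\tilde\xi,\lambda):=\det(\mathcal R_1^-,\dots,\mathcal R_{c-1}^-,\mathcal R_{c+1}^+,\dots,\mathcal R_n^+,\lambda[u]+i\tilde\xi[F^2])$, where $[u]=u_+-u_-$, $[F^2]=F^2(\varepsilon,u_+)-F^2(\varepsilon,u_-)$, and $\{\mathcal R^+_i\}$, $\{\mathcal R^-_i\}$ are bases of the unstable subspace of $\mathcal A_+$, resp. the stable subspace of $\mathcal A_-$, with $\mathcal A_\pm(\tilde\xi,\lambda)=(\lambda I+i\tilde\xi A^2_\pm)(A^1_\pm)^{-1}$; it is homogeneous of degree one and analytic away from finitely many branch singularities. Evans function: $D(\tilde\xi,\lambda)$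 is the determinant, at $x_1=0$, of bases of solutions decaying at $-\infty$ and at $+\infty$ of the first-order form of the eigenvalue ODE $w''-(A^1(x_1)w)'-i\tilde\xi A^2(x_1)w-\tilde\xi^2w=\lambda w$, $A^j(x_1)=\partial_uF^j(\varepsilon,\bar u^\varepsilon(x_1))$, chosen analytically in $\lambda$; its zeros with $\mathrm{Re}\,\lambda\ge0$ are the eigenvalues of the linearized operator on the Fourier mode $e^{i\tilde\xi x_2}$. In polar coordinates $D(\rho\tilde\xi_0,\rho\lambda_0)$ it satisfies $D|_{\rho=0}=0$, $\partial_\rho D|_{\rho=0}=\gamma\Delta(\tilde\xi_0,\lambda_0)$ ($\gamma\ne0$ a transversality constant). (B1): for $\varepsilon$ small, $\Delta^\varepsilon(1,\lambda)$ has no roots with $\mathrm{Re}\,\lambda\ge0$ except a single simple purely imaginary root $\lambda=i\tau_*(\varepsilon)\ne0$, lying away from the singularities of $\Delta^\varepsilon$. Refined stability coefficient: $\beta(\varepsilon):=-D_{\rho\rho}/D_{\rho\lambda}|_{\rho=0}$ evaluated at $(\tilde\xi_0,\lambda_0)=(1,i\tau_*(\varepsilon))$. (B2): $\mathrm{Re}\,\beta(0)=0$ and $\partial_\varepsilon\mathrm{Re}\,\beta(0)<0$. Known fact (used as given): under (H0)–(H2) and (B1), for $\varepsilon,\tilde\xi$ small there is a smooth family of roots $(\tilde\xi,\lambda_*^\varepsilon(\tilde\xi))$ of $D$ with $\lambda_*^\varepsilon(\tilde\xi)=i\tilde\xi\tau_*(\varepsilon)-\tilde\xi^2\beta(\varepsilon)+\delta(\varepsilon)\tilde\xi^3+r(\varepsilon,\tilde\xi)\tilde\xi^4$,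 $r\in C^1$; this defines $\delta(\varepsilon)$. *)

(* Defs.v *)
From Stdlib Require Import Reals.
From Coquelicot Require Export Coquelicot.
Open Scope R_scope.

Definition C1_near (f : R -> R) (x0 : R) : Prop :=
  exists eta : R, 0 < eta /\
    forall x, Rabs (x - x0) < eta -> ex_derive f x /\ continuous (Derive f) x.

Definition C1c_near (g : R -> C) (x0 : R) : Prop :=
  C1_near (fun x => Re (g x)) x0 /\ C1_near (fun x => Im (g x)) x0.

Definition C1_2d_near (f : R -> R -> R) (x0 y0 : R) : Prop :=
  exists eta : R, 0 < eta /\
    forall x y, Rabs (x - x0) < eta -> Rabs (y - y0) < eta ->
      ex_derive (fun t => f t y) x /\ ex_derive (fun t => f x t) y /\
      continuity_2d_pt (fun a b => Derive (fun t => f t b) a) x y /\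
      continuity_2d_pt (fun a b => Derive (fun t => f a t) b) x y.

Definition C1c_2d_near (g : R -> R -> C) (x0 y0 : R) : Prop :=
  C1_2d_near (fun a b => Re (g a b)) x0 y0 /\
  C1_2d_near (fun a b => Im (g a b)) x0 y0.

Definition expansion (tau : R -> R) (beta delta : R -> C) (r : R -> R -> C)
  (eps xi : R) : C :=
  Cplus (Cplus (Cplus (Cmult Ci (RtoC (xi * tau eps)))
                      (Copp (Cmult (RtoC (xi ^ 2)) (beta eps))))
               (Cmult (delta eps) (RtoC (xi ^ 3))))
        (Cmult (r eps xi) (RtoC (xi ^ 4))).

Definition zero_locus_graph (lam : R -> R -> C) (E : R -> R) : Prop :=
  exists e0 x0 : R, 0 < e0 /\ 0 < x0 /\
    forall eps xi, Rabs eps < e0 -> 0 < Rabs xi < x0 ->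
      (Re (lam eps xi) = 0 <-> eps = E xi).

Definition curve_spec (lam : R -> R -> C) (E : R -> R) : Prop :=
  C1_near E 0 /\ E 0 = 0 /\ zero_locus_graph lam E.

(* Main.v *)
Require Import Defs.
From Stdlib Require Import Reals Lra IndefiniteDescription.
From Coquelicot Require Import Coquelicot.
Open Scope R_scope.

Lemma deriv_contpt f x l : is_derive f x l -> continuity_pt f x.
Proof.
  intros H. apply continuity_pt_filterlim.
  apply (ex_derive_continuous f x). exists l; exact H.
Qed.

Lemma contpt_ed f x : continuity_pt f x -> forall eps, 0 < eps ->
  exists del, 0 < del /\ forall y, Rabs (y - x) < del -> Rabs (f y - f x) < eps.
Proof.
  unfold continuity_pt, continue_in, limit1_in, limit_in.
  intros H eps He; destruct (H eps He) as [del [Hd Hy]]; exists del; split; auto.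
  intros y Hy'. destruct (Req_dec y x) as [->|Hne].
  - unfold Rminus; rewrite Rplus_opp_r, Rabs_R0; auto.
  - apply (Hy y); split; [unfold D_x, no_cond; auto | simpl; unfold R_dist; auto].
Qed.

Lemma ed_contpt f x : (forall eps, 0 < eps ->
  exists del, 0 < del /\ forall y, Rabs (y - x) < del -> Rabs (f y - f x) < eps) ->
  continuity_pt f x.
Proof.
  unfold continuity_pt, continue_in, limit1_in, limit_in.
  intros H eps He; destruct (H eps He) as [del [Hd Hy]]; exists del; split; auto.
  intros y [_ Hy']. simpl in *; unfold R_dist in *; auto.
Qed.

Lemma c2d_ed f x y : continuity_2d_pt f x y -> forall eps, 0 < eps ->
  exists del, 0 < del /\ forall u v, Rabs (u - x) < del -> Rabs (v - y) < del ->
    Rabs (f u v - f x y) < eps.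
Proof.
  intros H eps He. destruct (H (mkposreal eps He)) as [d Hd].
  exists d; split; [apply cond_pos|]. intros; apply Hd; auto.
Qed.

Lemma between_abs p q c : Rmin p q <= c <= Rmax p q -> Rabs (c - p) <= Rabs (q - p).
Proof.
  unfold Rmin, Rmax; destruct (Rle_dec p q); intros [H1 H2];
  unfold Rabs; repeat destruct Rcase_abs; lra.
Qed.

Lemma mvt_box (g dg : R -> R) p q :
  (forall t, Rmin p q <= t <= Rmax p q -> is_derive g t (dg t)) ->
  exists c, Rmin p q <= c <= Rmax p q /\ g q - g p = dg c * (q - p).
Proof.
  intros H. apply (MVT_gen g p q dg).
  - intros t Ht; apply H; lra.
  - intros t Ht; apply (deriv_contpt g t (dg t)); apply H; auto.
Qed.

Lemma div_cont A0 B0 eps : 0 < B0 -> 0 < eps -> exists del, 0 < del /\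
  forall A B, Rabs (A - A0) < del -> Rabs (B - B0) < del ->
    Rabs (A / B - A0 / B0) < eps.
Proof.
  intros HB He.
  set (K := B0 + Rabs A0).
  assert (HK : 0 < K) by (unfold K; pose proof (Rabs_pos A0); lra).
  exists (Rmin (B0/2) (eps * (B0*B0) / (4 * K))).
  split. { apply Rmin_glb_lt; [lra|]. apply Rdiv_lt_0_compat; [|lra].
           apply Rmult_lt_0_compat; nra. }
  intros A B HA HBd.
  pose proof (Rmin_l (B0/2) (eps * (B0*B0) / (4 * K))) as m1.
  pose proof (Rmin_r (B0/2) (eps * (B0*B0) / (4 * K))) as m2.
  set (dl := Rmin (B0/2) (eps * (B0*B0) / (4 * K))) in *.
  assert (Hd4 : dl * (4*K) <= eps * (B0*B0)).
  { apply Rmult_le_compat_r with (r := 4*K) in m2; [|lra].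
    replace (eps * (B0 * B0) / (4 * K) * (4 * K)) with (eps*(B0*B0)) in m2 by (field; lra). lra. }
  assert (HBp : B0/2 < B).
  { apply Rabs_def2 in HBd. lra. }
  assert (E : A / B - A0 / B0 = ((A - A0) * B0 - A0 * (B - B0)) / (B * B0)) by (field; lra).
  rewrite E, Rabs_div by nra.
  rewrite (Rabs_right (B*B0)) by nra.
  apply Rlt_div_l; [nra|].
  assert (N : Rabs ((A - A0) * B0 - A0 * (B - B0)) <= dl * K).
  { eapply Rle_trans; [apply Rabs_triang|].
    rewrite Rabs_Ropp, !Rabs_mult, (Rabs_right B0) by lra.
    unfold K. pose proof (Rabs_pos A0). pose proof (Rabs_pos (B - B0)).
    pose proof (Rabs_pos (A - A0)). nra. }
  assert (eps*(B0*B0/2) < eps*(B*B0)) by (apply Rmult_lt_compat_l; nra).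
  assert (0 < eps*(B0*B0)) by (apply Rmult_lt_0_compat; nra). lra.
Qed.

Lemma bound_prod a a0 h d : Rabs (a - a0) < 1 -> Rabs h < d ->
  Rabs (a*h) < (Rabs a0 + 1)*d.
Proof.
  intros H1 H2. rewrite Rabs_mult.
  pose proof (Rabs_triang_inv a a0). pose proof (Rabs_pos a). pose proof (Rabs_pos h).
  nra.
Qed.

Lemma in_box p q t eta : Rmin p q <= t <= Rmax p q -> Rabs p + Rabs (q - p) < eta -> Rabs t < eta.
Proof.
  intros H1 H2. pose proof (between_abs p q t H1).
  pose proof (Rabs_triang p (t - p)). replace (p + (t - p)) with t in H0 by ring. lra.
Qed.

Lemma cont_partials (f f1 f2 : R->R->R) (eta : R) :
 (forall u v, Rabs u < eta -> Rabs v < eta ->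
   is_derive (fun t => f t v) u (f1 u v) /\ is_derive (fun t => f u t) v (f2 u v) /\
   continuity_2d_pt f1 u v /\ continuity_2d_pt f2 u v) ->
 forall x y, Rabs x < eta -> Rabs y < eta -> continuity_2d_pt f x y.
Proof.
  intros H x y Hx Hy.
  destruct (H x y Hx Hy) as (_ & _ & C1 & C2).
  destruct (c2d_ed _ _ _ C1 1 Rlt_0_1) as [da [Hda Ha]].
  destruct (c2d_ed _ _ _ C2 1 Rlt_0_1) as [db [Hdb Hb]].
  set (M := Rabs (f1 x y) + 1 + (Rabs (f2 x y) + 1)).
  assert (HM : 0 < M) by (unfold M; pose proof (Rabs_pos (f1 x y)); pose proof (Rabs_pos (f2 x y)); lra).
  intros eps.
  set (m := Rmin (eta - Rabs x) (eta - Rabs y)).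
  assert (Hm : 0 < m) by (apply Rmin_glb_lt; lra).
  set (d := Rmin m (Rmin da (Rmin db (eps/M)))).
  assert (Hd : 0 < d).
  { unfold d; apply Rmin_glb_lt; [exact Hm|]. apply Rmin_glb_lt; [exact Hda|].
    apply Rmin_glb_lt; [exact Hdb|]. apply Rdiv_lt_0_compat; auto. apply cond_pos. }
  pose proof (Rmin_l m (Rmin da (Rmin db (eps/M)))) as d1.
  pose proof (Rmin_r m (Rmin da (Rmin db (eps/M)))) as d2.
  pose proof (Rmin_l da (Rmin db (eps/M))) as d3.
  pose proof (Rmin_r da (Rmin db (eps/M))) as d4.
  pose proof (Rmin_l db (eps/M)) as d5.
  pose proof (Rmin_r db (eps/M)) as d6.
  pose proof (Rmin_l (eta - Rabs x) (eta - Rabs y)) as m1.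
  pose proof (Rmin_r (eta - Rabs x) (eta - Rabs y)) as m2.
  fold d in d1, d2. fold m in m1, m2, d1.
  exists (mkposreal d Hd). intros u v Hu Hv. simpl in Hu, Hv.
  assert (Hv' : Rabs v < eta).
  { apply (in_box y v v eta); [unfold Rmin, Rmax; destruct Rle_dec; lra | lra]. }
  destruct (mvt_box (fun t => f t v) (fun t => f1 t v) x u) as [c1 [Hc1 E1]].
  { intros t Ht. apply (H t v); auto. apply (in_box x u t eta Ht). lra. }
  destruct (mvt_box (fun t => f x t) (fun t => f2 x t) y v) as [c2 [Hc2 E2]].
  { intros t Ht. apply (H x t); auto. apply (in_box y v t eta Ht). lra. }
  simpl in E1, E2.
  replace (f u v - f x y) with (f1 c1 v * (u - x) + f2 x c2 * (v - y)) by lra.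
  pose proof (between_abs _ _ _ Hc1). pose proof (between_abs _ _ _ Hc2).
  assert (B1 : Rabs (f1 c1 v - f1 x y) < 1) by (apply Ha; lra).
  assert (B2 : Rabs (f2 x c2 - f2 x y) < 1).
  { apply Hb; [unfold Rminus; rewrite Rplus_opp_r, Rabs_R0; lra | lra]. }
  pose proof (bound_prod _ _ (u - x) d B1 Hu).
  pose proof (bound_prod _ _ (v - y) d B2 Hv).
  eapply Rle_lt_trans; [apply Rabs_triang|].
  assert (M * d <= eps).
  { assert (d7 : d <= eps / M) by lra.
    apply Rmult_le_compat_l with (r := M) in d7; [|lra].
    replace (M * (eps / M)) with (pos eps) in d7 by (field; lra). lra. }
  unfold M in *. lra.
Qed.

Lemma between_box p q t B : Rabs p < B -> Rabs q < B -> Rmin p q <= t <= Rmax p q -> Rabs t < B.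
Proof.
  unfold Rmin, Rmax; destruct (Rle_dec p q); intros H1 H2 [H3 H4];
  unfold Rabs in *; repeat destruct Rcase_abs; lra.
Qed.

Lemma abs_near x y c d : Rabs x < c -> Rabs (y - x) < d -> Rabs y < c + d.
Proof. intros; unfold Rabs in *; repeat destruct Rcase_abs; lra. Qed.

Lemma IFT (G Ge Gx : R -> R -> R) (eta : R) :
 0 < eta ->
 (forall e x, Rabs e < eta -> Rabs x < eta ->
   is_derive (fun t => G t x) e (Ge e x) /\ is_derive (fun t => G e t) x (Gx e x) /\
   continuity_2d_pt Ge e x /\ continuity_2d_pt Gx e x) ->
 G 0 0 = 0 -> 0 < Ge 0 0 ->
 exists E a x0, 0 < a /\ 0 < x0 /\ E 0 = 0 /\
  (forall e x, Rabs e < a -> Rabs x < x0 -> (G e x = 0 <-> e = E x)) /\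
  (forall x, Rabs x < x0 -> is_derive E x (- Gx (E x) x / Ge (E x) x) /\
                            continuous (Derive E) x).
Proof.
  intros Heta H G00 Gpos.
  set (k := Ge 0 0) in *.
  destruct (H 0 0) as (_ & _ & CGe0 & _); try (rewrite Rabs_R0; lra).
  destruct (c2d_ed _ _ _ CGe0 (k/2)) as [d1 [Hd1 Hd1']]; [lra|].
  set (B := Rmin d1 eta).
  assert (HBd1 : B <= d1) by apply Rmin_l.
  assert (HBeta : B <= eta) by apply Rmin_r.
  assert (HB : 0 < B) by (apply Rmin_glb_lt; lra).
  set (a := B/2).
  assert (Ha : 0 < a) by (unfold a; lra).
  assert (HaB : a < B) by (unfold a; lra).
  assert (HGe : forall u v, Rabs u < B -> Rabs v < B -> k/2 < Ge u v).
  { intros u v Hu Hv. specialize (Hd1' u v). rewrite !Rminus_0_r in Hd1'.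
    assert (Rabs (Ge u v - k) < k/2) by (apply Hd1'; lra).
    apply Rabs_def2 in H0. lra. }
  assert (HH : forall u v, Rabs u < B -> Rabs v < B ->
     is_derive (fun t => G t v) u (Ge u v) /\ is_derive (fun t => G u t) v (Gx u v) /\
     continuity_2d_pt Ge u v /\ continuity_2d_pt Gx u v).
  { intros; apply H; lra. }
  assert (Mono : forall v p q, Rabs v < B -> Rabs p < B -> Rabs q < B -> p <= q ->
                 k/2*(q-p) <= G q v - G p v).
  { intros v p q Hv Hp Hq Hpq.
    destruct (mvt_box (fun t => G t v) (fun t => Ge t v) p q) as [c [Hc Ec]].
    { intros t Ht. apply HH; auto. apply (between_box p q t B); auto. }
    simpl in Ec. rewrite Ec.
    assert (k/2 < Ge c v) by (apply HGe; auto; apply (between_box p q c B); auto).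
    nra. }
  assert (Hpos : k/2*a <= G a 0).
  { pose proof (Mono 0 0 a). rewrite Rabs_R0, Rminus_0_r, G00 in H0.
    assert (Rabs a < B) by (rewrite Rabs_right; lra). specialize (H0 HB HB H1). lra. }
  assert (Hneg : G (-a) 0 <= - (k/2*a)).
  { pose proof (Mono 0 (-a) 0). rewrite Rabs_R0, G00 in H0.
    assert (Rabs (-a) < B) by (rewrite Rabs_Ropp, Rabs_right; lra). specialize (H0 HB H1 HB). lra. }
  assert (Hab : Rabs a < B) by (rewrite Rabs_right; lra).
  assert (Hab' : Rabs (-a) < B) by (rewrite Rabs_Ropp, Rabs_right; lra).
  assert (Hka : 0 < k/2*a) by (apply Rmult_lt_0_compat; lra).
  destruct (HH a 0 Hab (ltac:(rewrite Rabs_R0; lra))) as (_ & Da & _).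
  destruct (contpt_ed _ _ (deriv_contpt _ _ _ Da) (k/2*a) Hka) as [d2 [Hd2 Hd2']].
  destruct (HH (-a) 0 Hab' (ltac:(rewrite Rabs_R0; lra))) as (_ & Dma & _).
  destruct (contpt_ed _ _ (deriv_contpt _ _ _ Dma) (k/2*a) Hka) as [d3 [Hd3 Hd3']].
  set (x0 := Rmin a (Rmin d2 d3)).
  assert (Hx0a : x0 <= a) by apply Rmin_l.
  assert (Hx02 : x0 <= d2) by (eapply Rle_trans; [apply Rmin_r| apply Rmin_l]).
  assert (Hx03 : x0 <= d3) by (eapply Rle_trans; [apply Rmin_r| apply Rmin_r]).
  assert (Hx0 : 0 < x0) by (apply Rmin_glb_lt; [lra|]; apply Rmin_glb_lt; lra).
  assert (Hex : forall x, exists e, Rabs x < x0 -> Rabs e < a /\ G e x = 0).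
  { intros x. destruct (Rlt_dec (Rabs x) x0) as [Hx|Hx].
    - assert (Hxp : 0 < G a x).
      { assert (Rabs (x - 0) < d2) by (rewrite Rminus_0_r; lra).
        specialize (Hd2' x H0). apply Rabs_def2 in Hd2'. simpl in Hd2'. lra. }
      assert (Hxn : G (-a) x < 0).
      { assert (Rabs (x - 0) < d3) by (rewrite Rminus_0_r; lra).
        specialize (Hd3' x H0). apply Rabs_def2 in Hd3'. simpl in Hd3'. lra. }
      destruct (Ranalysis5.IVT_interv (fun t => G t x) (-a) a) as [z [Hz Gz]].
      + intros t Ht. apply (deriv_contpt _ _ (Ge t x)). apply HH; [|lra].
        unfold Rabs; destruct Rcase_abs; lra.
      + lra.
      + exact Hxn.
      + exact Hxp.
      + exists z; intros _. split; auto.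
        assert (z <> a) by (intros ->; lra). assert (z <> -a) by (intros ->; lra).
        unfold Rabs; destruct Rcase_abs; lra.
    - exists 0; intros; contradiction. }
  set (E := fun x => proj1_sig (constructive_indefinite_description _ (Hex x))).
  assert (HE : forall x, Rabs x < x0 -> Rabs (E x) < a /\ G (E x) x = 0).
  { intros x Hx. unfold E. destruct (constructive_indefinite_description _ (Hex x)) as [e He].
    simpl. auto. }
  assert (Uniq : forall x p q, Rabs x < x0 -> Rabs p < B -> Rabs q < B ->
                 G p x = 0 -> G q x = 0 -> p = q).
  { intros x p q Hx Hp Hq Gp Gq.
    destruct (Rtotal_order p q) as [Hlt|[Heq|Hgt]]; auto.
    - pose proof (Mono x p q ltac:(lra) Hp Hq ltac:(lra)). nra.
    - pose proof (Mono x q p ltac:(lra) Hq Hp ltac:(lra)). nra. }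
  assert (HEB : forall x, Rabs x < x0 -> Rabs (E x) < B) by (intros x Hx; pose proof (HE x Hx); lra).
  assert (HxB : forall x, Rabs x < x0 -> Rabs x < B) by (intros; lra).
  assert (E0 : E 0 = 0).
  { assert (Rabs 0 < x0) by (rewrite Rabs_R0; lra).
    apply (Uniq 0); auto; try (rewrite Rabs_R0; lra); apply (HE 0 H0). }
  assert (Cont : forall x, Rabs x < x0 -> forall eps, 0 < eps ->
     exists del, 0 < del /\ forall y, Rabs (y - x) < del -> Rabs (E y - E x) < eps).
  { intros x Hx eps Heps.
    destruct (HE x Hx) as [HEx GEx].
    set (e' := Rmin (eps/2) ((a - Rabs (E x))/2)).
    assert (He'1 : e' <= eps/2) by apply Rmin_l.
    assert (He'2 : e' <= (a - Rabs (E x))/2) by apply Rmin_r.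
    assert (He' : 0 < e') by (apply Rmin_glb_lt; lra).
    assert (Hq : Rabs (E x + e') < B) by (unfold Rabs in *; repeat destruct Rcase_abs; lra).
    assert (Hp : Rabs (E x - e') < B) by (unfold Rabs in *; repeat destruct Rcase_abs; lra).
    assert (Gq : k/2*e' <= G (E x + e') x).
    { pose proof (Mono x (E x) (E x + e') (HxB x Hx) (HEB x Hx) Hq ltac:(lra)). rewrite GEx in H0.
      replace (E x + e' - E x) with e' in H0 by ring. lra. }
    assert (Gp : G (E x - e') x <= -(k/2*e')).
    { pose proof (Mono x (E x - e') (E x) (HxB x Hx) Hp (HEB x Hx) ltac:(lra)). rewrite GEx in H0.
      replace (E x - (E x - e')) with e' in H0 by ring. lra. }
    assert (Hke : 0 < k/2*e') by (apply Rmult_lt_0_compat; lra).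
    destruct (HH (E x + e') x Hq (HxB x Hx)) as (_ & Dq & _).
    destruct (contpt_ed _ _ (deriv_contpt _ _ _ Dq) (k/2*e') Hke) as [d4 [Hd4 Hd4']].
    destruct (HH (E x - e') x Hp (HxB x Hx)) as (_ & Dp & _).
    destruct (contpt_ed _ _ (deriv_contpt _ _ _ Dp) (k/2*e') Hke) as [d5 [Hd5 Hd5']].
    exists (Rmin d4 (Rmin d5 (x0 - Rabs x))).
    split. { apply Rmin_glb_lt; [lra|]; apply Rmin_glb_lt; lra. }
    intros y Hy.
    pose proof (Rmin_l d4 (Rmin d5 (x0 - Rabs x))).
    pose proof (Rmin_r d4 (Rmin d5 (x0 - Rabs x))).
    pose proof (Rmin_l d5 (x0 - Rabs x)). pose proof (Rmin_r d5 (x0 - Rabs x)).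
    assert (Hyx0 : Rabs y < x0).
    { pose proof (abs_near x y (Rabs x) (x0 - Rabs x)). 
      assert (Rabs x < Rabs x + 1) by lra.
      unfold Rabs in *; repeat destruct Rcase_abs; lra. }
    destruct (HE y Hyx0) as [HEy GEy].
    assert (Gqy : 0 < G (E x + e') y).
    { assert (Rabs (y - x) < d4) by lra. specialize (Hd4' y H4). simpl in Hd4'.
      apply Rabs_def2 in Hd4'. lra. }
    assert (Gpy : G (E x - e') y < 0).
    { assert (Rabs (y - x) < d5) by lra. specialize (Hd5' y H4). simpl in Hd5'.
      apply Rabs_def2 in Hd5'. lra. }
    assert (U1 : E y < E x + e').
    { destruct (Rlt_le_dec (E y) (E x + e')) as [?|Hc]; auto.
      pose proof (Mono y (E x + e') (E y) (HxB y Hyx0) Hq (HEB y Hyx0) Hc). nra. }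
    assert (U2 : E x - e' < E y).
    { destruct (Rlt_le_dec (E x - e') (E y)) as [?|Hc]; auto.
      pose proof (Mono y (E y) (E x - e') (HxB y Hyx0) (HEB y Hyx0) Hp Hc). nra. }
    apply Rabs_def1; lra. }
  assert (Hy0 : forall x y d, Rabs x < x0 -> Rabs (y - x) < d -> d <= x0 - Rabs x -> Rabs y < x0).
  { intros x y d Hx Hyx Hd. unfold Rabs in *; repeat destruct Rcase_abs; lra. }
  assert (Deriv : forall x, Rabs x < x0 ->
     derivable_pt_lim E x (- Gx (E x) x / Ge (E x) x)).
  { intros x Hx eps Heps.
    destruct (HE x Hx) as [HEx GEx].
    set (A0 := Gx (E x) x). set (B0 := Ge (E x) x).
    assert (HB0 : k/2 < B0) by (apply HGe; auto).
    destruct (div_cont A0 B0 eps ltac:(lra) Heps) as [dd [Hdd Hdd']].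
    destruct (HH (E x) x (HEB x Hx) (HxB x Hx)) as (_ & _ & CGe & CGx).
    destruct (c2d_ed _ _ _ CGx dd Hdd) as [d6 [Hd6 Hd6']].
    destruct (c2d_ed _ _ _ CGe dd Hdd) as [d7 [Hd7 Hd7']].
    destruct (Cont x Hx (Rmin d6 d7) ltac:(apply Rmin_glb_lt; lra)) as [d8 [Hd8 Hd8']].
    assert (Hdel : 0 < Rmin d8 (Rmin d6 (Rmin d7 (x0 - Rabs x)))).
    { apply Rmin_glb_lt; [lra|]; apply Rmin_glb_lt; [lra|]; apply Rmin_glb_lt; lra. }
    exists (mkposreal _ Hdel). intros h Hh0 Hh. simpl in Hh.
    pose proof (Rmin_l d8 (Rmin d6 (Rmin d7 (x0 - Rabs x)))) as m1.
    pose proof (Rmin_r d8 (Rmin d6 (Rmin d7 (x0 - Rabs x)))) as m2.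
    pose proof (Rmin_l d6 (Rmin d7 (x0 - Rabs x))) as m3.
    pose proof (Rmin_r d6 (Rmin d7 (x0 - Rabs x))) as m4.
    pose proof (Rmin_l d7 (x0 - Rabs x)) as m5.
    pose proof (Rmin_r d7 (x0 - Rabs x)) as m6.
    pose proof (Rmin_l d6 d7) as m7. pose proof (Rmin_r d6 d7) as m8.
    set (y := x + h).
    assert (Hyx : y - x = h) by (unfold y; ring).
    assert (Hyx0 : Rabs y < x0) by (apply (Hy0 x y (x0 - Rabs x)); [auto| rewrite Hyx; lra | lra]).
    destruct (HE y Hyx0) as [HEy GEy].
    destruct (mvt_box (fun t => G t y) (fun t => Ge t y) (E x) (E y)) as [c1 [Hc1 Ec1]].
    { intros t Ht. apply HH; auto. apply (between_box (E x) (E y) t B); auto. }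
    destruct (mvt_box (fun t => G (E x) t) (fun t => Gx (E x) t) x y) as [c2 [Hc2 Ec2]].
    { intros t Ht. apply HH; auto. apply (between_box x y t B); auto. }
    simpl in Ec1, Ec2.
    pose proof (between_abs _ _ _ Hc1) as Bc1. pose proof (between_abs _ _ _ Hc2) as Bc2.
    assert (HEyx : Rabs (E y - E x) < Rmin d6 d7) by (apply Hd8'; rewrite Hyx; lra).
    assert (HA : Rabs (Gx (E x) c2 - A0) < dd).
    { apply Hd6'; [unfold Rminus; rewrite Rplus_opp_r, Rabs_R0; lra | rewrite Hyx in Bc2; lra]. }
    assert (HBB : Rabs (Ge c1 y - B0) < dd) by (apply Hd7'; [lra| rewrite Hyx; lra]).
    assert (HBc : k/2 < Ge c1 y).
    { apply HGe; auto. apply (between_box (E x) (E y) c1 B); auto. }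
    specialize (Hdd' _ _ HA HBB).
    rewrite GEy, GEx in *. rewrite Hyx in Ec2.
    assert (Key : E y - E x = - Gx (E x) c2 * h / Ge c1 y).
    { apply (Rmult_eq_reg_l (Ge c1 y)); [|lra].
      replace (Ge c1 y * (- Gx (E x) c2 * h / Ge c1 y)) with (- Gx (E x) c2 * h) by (field; lra).
      lra. }
    fold y. rewrite Key.
    replace (- Gx (E x) c2 * h / Ge c1 y / h - - A0 / B0)
      with (- (Gx (E x) c2 / Ge c1 y - A0 / B0)) by (field; lra).
    rewrite Rabs_Ropp. exact Hdd'. }
  assert (DE : forall x, Rabs x < x0 -> Derive E x = - Gx (E x) x / Ge (E x) x).
  { intros x Hx. apply is_derive_unique. apply is_derive_Reals. apply Deriv; auto. }
  exists E, a, x0. split; [lra|]. split; [lra|]. split; [exact E0|]. split.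
  { intros e x He Hx. split.
    - intros Ge0. apply (Uniq x); [auto|lra|apply HEB; auto|auto|apply HE; auto].
    - intros ->. apply (HE x Hx). }
  intros x Hx. split.
  { apply is_derive_Reals. apply Deriv; auto. }
  apply (proj1 (continuity_pt_filterlim _ _)). apply ed_contpt.
  intros eps Heps.
  destruct (HE x Hx) as [HEx GEx].
  set (A0 := Gx (E x) x). set (B0 := Ge (E x) x).
  assert (HB0 : k/2 < B0) by (apply HGe; auto).
  destruct (div_cont A0 B0 eps ltac:(lra) Heps) as [dd [Hdd Hdd']].
  destruct (HH (E x) x (HEB x Hx) (HxB x Hx)) as (_ & _ & CGe & CGx).
  destruct (c2d_ed _ _ _ CGx dd Hdd) as [d6 [Hd6 Hd6']].
  destruct (c2d_ed _ _ _ CGe dd Hdd) as [d7 [Hd7 Hd7']].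
  destruct (Cont x Hx (Rmin d6 d7) ltac:(apply Rmin_glb_lt; lra)) as [d8 [Hd8 Hd8']].
  exists (Rmin d8 (Rmin d6 (Rmin d7 (x0 - Rabs x)))).
  split. { apply Rmin_glb_lt; [lra|]; apply Rmin_glb_lt; [lra|]; apply Rmin_glb_lt; lra. }
  intros y Hy.
  pose proof (Rmin_l d8 (Rmin d6 (Rmin d7 (x0 - Rabs x)))) as m1.
  pose proof (Rmin_r d8 (Rmin d6 (Rmin d7 (x0 - Rabs x)))) as m2.
  pose proof (Rmin_l d6 (Rmin d7 (x0 - Rabs x))) as m3.
  pose proof (Rmin_r d6 (Rmin d7 (x0 - Rabs x))) as m4.
  pose proof (Rmin_l d7 (x0 - Rabs x)) as m5.
  pose proof (Rmin_r d7 (x0 - Rabs x)) as m6.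
  pose proof (Rmin_l d6 d7) as m7. pose proof (Rmin_r d6 d7) as m8.
  assert (Hyx0 : Rabs y < x0) by (apply (Hy0 x y (x0 - Rabs x)); [auto| lra | lra]).
  assert (HEyx : Rabs (E y - E x) < Rmin d6 d7) by (apply Hd8'; lra).
  assert (HA : Rabs (Gx (E y) y - A0) < dd) by (apply Hd6'; lra).
  assert (HBB : Rabs (Ge (E y) y - B0) < dd) by (apply Hd7'; lra).
  assert (HBc : k/2 < Ge (E y) y) by (apply HGe; auto).
  specialize (Hdd' _ _ HA HBB).
  rewrite (DE y Hyx0), (DE x Hx). fold A0 B0.
  replace (- Gx (E y) y / Ge (E y) y - - A0 / B0)
      with (- (Gx (E y) y / Ge (E y) y - A0 / B0)) by (field; lra).
  rewrite Rabs_Ropp. exact Hdd'.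
Qed.

Lemma re_exp tau beta delta r eps xi : Re (expansion tau beta delta r eps xi) =
  xi*xi * (- Re (beta eps) + xi * Re (delta eps) + xi*xi * Re (r eps xi)).
Proof.
  unfold expansion. destruct (beta eps), (delta eps), (r eps xi).
  unfold Cplus, Cmult, Copp, Ci, RtoC, Re; simpl; ring.
Qed.

Lemma c1d2d f x y : continuity_pt f x -> continuity_2d_pt (fun u v => f u) x y.
Proof.
  intros H. apply (continuity_1d_2d_pt_comp f (fun u v => u)); auto.
  apply continuity_2d_pt_id1.
Qed.

Lemma contpt_of_continuous f x : continuous f x -> continuity_pt f x.
Proof. intros H; apply continuity_pt_filterlim; exact H. Qed.

Lemma derG1 (b d : R -> R) (rho : R -> R -> R) (x e : R) : ex_derive b e -> ex_derive d e -> ex_derive (fun t => rho t x) e ->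
  is_derive (fun t => - b t + x * d t + x * x * rho t x) e
    (- Derive b e + x * Derive d e + x * x * Derive (fun t => rho t x) e).
Proof.
  intros. auto_derive. auto. change (fun x0 => b x0) with b. change (fun x0 => d x0) with d. ring.
Qed.
Lemma derG2 (b d : R -> R) (rho : R -> R -> R) (x e : R) : ex_derive (fun t => rho e t) x ->
  is_derive (fun t => - b e + t * d e + t * t * rho e t) x
    (d e + 2 * x * rho e x + x * x * Derive (fun t => rho e t) x).
Proof.
  intros. auto_derive. auto. ring.
Qed.

Theorem corollary1p11
  (tau : R -> R) (beta delta : R -> C) (r : R -> R -> C) (lam : R -> R -> C)
  (* regularity of the coefficients of the expansion *)
  (Hbeta : C1c_near beta 0) (Hdelta : C1c_near delta 0)
  (Hr : C1c_2d_near r 0 0)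
  (* the root family lambda_*^eps(xi) has the stated expansion near (0,0) *)
  (Hlam : exists eta : R, 0 < eta /\ forall eps xi, Rabs eps < eta -> Rabs xi < eta ->
            lam eps xi = expansion tau beta delta r eps xi)
  (* (B2) *)
  (HB2a : Re (beta 0) = 0)
  (HB2b : Derive (fun e => Re (beta e)) 0 < 0) :
  (exists E : R -> R, curve_spec lam E /\
     (forall E' : R -> R, curve_spec lam E' ->
        exists eta : R, 0 < eta /\ forall xi, Rabs xi < eta -> E' xi = E xi) /\
     (Re (delta 0) <> 0 ->
        is_lim (fun xi => E xi /
                  ((Re (delta 0) / Derive (fun e => Re (beta e)) 0) * xi)) 0 1)).
Proof.
Proof.
  set (b := fun e => Re (beta e)) in *.
  set (d := fun e => Re (delta e)).
  set (rho := fun u v => Re (r u v)).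
  destruct Hbeta as [[eb [Heb Hb]] _].
  destruct Hdelta as [[ed [Hed Hd]] _].
  destruct Hr as [[er [Her Hr']] _].
  destruct Hlam as [el [Hel Hlam]].
  fold b in Hb. fold d in Hd. fold rho in Hr'.
  assert (Hrho : forall u v, Rabs u < er -> Rabs v < er ->
     is_derive (fun t => rho t v) u (Derive (fun t => rho t v) u) /\
     is_derive (fun t => rho u t) v (Derive (fun t => rho u t) v) /\
     continuity_2d_pt (fun a c => Derive (fun t => rho t c) a) u v /\
     continuity_2d_pt (fun a c => Derive (fun t => rho a t) c) u v).
  { intros u v Hu Hv. destruct (Hr' u v) as (H1 & H2 & H3 & H4); try (rewrite Rminus_0_r; auto).
    repeat split; auto; apply Derive_correct; auto. }
  pose proof (cont_partials rho _ _ er Hrho) as Crho.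
  set (G := fun e x => - b e + x * d e + x * x * rho e x).
  set (Ge := fun e x => - Derive b e + x * Derive d e + x * x * Derive (fun t => rho t x) e).
  set (Gx := fun e x => d e + 2 * x * rho e x + x * x * Derive (fun t => rho e t) x).
  set (etaG := Rmin eb (Rmin ed er)).
  assert (HetaG : 0 < etaG) by (apply Rmin_glb_lt; [lra|]; apply Rmin_glb_lt; lra).
  assert (e1 : etaG <= eb) by apply Rmin_l.
  assert (e2 : etaG <= ed) by (eapply Rle_trans; [apply Rmin_r|apply Rmin_l]).
  assert (e3 : etaG <= er) by (eapply Rle_trans; [apply Rmin_r|apply Rmin_r]).
  destruct (IFT G Ge Gx etaG HetaG) as (E & a & x0 & Ha & Hx0 & E0 & Graph & DerE).
  { intros e x He Hx.
    assert (Hb1 := Hb e ltac:(rewrite Rminus_0_r; lra)).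
    assert (Hd1 := Hd e ltac:(rewrite Rminus_0_r; lra)).
    destruct (Hrho e x ltac:(lra) ltac:(lra)) as (R1 & R2 & R3 & R4).
    split; [|split; [|split]].
    - apply derG1; [apply Hb1 | apply Hd1 | eexists; apply R1].
    - apply derG2. eexists; apply R2.
    - unfold Ge. apply continuity_2d_pt_plus; [apply continuity_2d_pt_plus|].
      + apply continuity_2d_pt_opp. apply c1d2d. apply contpt_of_continuous, Hb1.
      + apply continuity_2d_pt_mult; [apply continuity_2d_pt_id2|].
        apply c1d2d. apply contpt_of_continuous, Hd1.
      + apply continuity_2d_pt_mult; [apply continuity_2d_pt_mult; apply continuity_2d_pt_id2|].
        exact R3.
    - unfold Gx. apply continuity_2d_pt_plus; [apply continuity_2d_pt_plus|].
      + apply c1d2d. destruct Hd1 as [[l Hl] _]. apply (deriv_contpt _ _ l Hl).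
      + apply continuity_2d_pt_mult; [apply continuity_2d_pt_mult; [apply continuity_2d_pt_const|apply continuity_2d_pt_id2]|].
        apply Crho; lra.
      + apply continuity_2d_pt_mult; [apply continuity_2d_pt_mult; apply continuity_2d_pt_id2|].
        exact R4. }
  { unfold G, b. rewrite HB2a. ring. }
  { unfold Ge. fold b in HB2b. lra. }
  assert (Hre : forall eps xi, Rabs eps < el -> Rabs xi < el -> Re (lam eps xi) = xi*xi * G eps xi).
  { intros eps xi H1 H2; rewrite Hlam by auto; rewrite re_exp; reflexivity. }
  assert (ZL : forall eps xi, Rabs eps < Rmin a el -> 0 < Rabs xi < Rmin x0 el ->
     (Re (lam eps xi) = 0 <-> eps = E xi)).
  { intros eps xi He [Hx1 Hx2].
    pose proof (Rmin_l a el). pose proof (Rmin_r a el).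
    pose proof (Rmin_l x0 el). pose proof (Rmin_r x0 el).
    rewrite Hre by lra. rewrite <- Graph by lra. split; intros HH.
    - apply Rmult_integral in HH; destruct HH as [HH|HH]; auto.
      assert (xi = 0) by nra. subst xi. rewrite Rabs_R0 in Hx1; lra.
    - rewrite HH; ring. }
  exists E.
  assert (Spec : curve_spec lam E).
  { split; [|split; [exact E0|]].
    - exists x0; split; auto. intros x Hx. rewrite Rminus_0_r in Hx.
      destruct (DerE x Hx) as [D1 D2]. split; [eexists; exact D1 | exact D2].
    - exists (Rmin a el), (Rmin x0 el). split; [apply Rmin_glb_lt; lra|].
      split; [apply Rmin_glb_lt; lra|]. exact ZL. }
  split; [exact Spec|split].
  - intros E' [[h' [Hh' HC]] [E'0 [e0' [x0' [He0' [Hx0' HG']]]]]].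
    destruct (HC 0 ltac:(rewrite Rminus_0_r, Rabs_R0; lra)) as [[l Hl] _].
    assert (Hm : 0 < Rmin e0' (Rmin a el)) by (apply Rmin_glb_lt; [lra|]; apply Rmin_glb_lt; lra).
    destruct (contpt_ed _ _ (deriv_contpt _ _ _ Hl) _ Hm) as [del [Hdel Hdel']].
    pose proof (Rmin_l e0' (Rmin a el)). pose proof (Rmin_r e0' (Rmin a el)).
    exists (Rmin del (Rmin x0' (Rmin x0 el))).
    split. { apply Rmin_glb_lt; [lra|]; apply Rmin_glb_lt; [lra|]; apply Rmin_glb_lt; lra. }
    intros xi Hxi.
    pose proof (Rmin_l del (Rmin x0' (Rmin x0 el))). pose proof (Rmin_r del (Rmin x0' (Rmin x0 el))).
    pose proof (Rmin_l x0' (Rmin x0 el)). pose proof (Rmin_r x0' (Rmin x0 el)).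
    destruct (Req_dec xi 0) as [->|Hxi0]; [rewrite E'0, E0; reflexivity|].
    assert (HE' : Rabs (E' xi) < Rmin e0' (Rmin a el)).
    { specialize (Hdel' xi ltac:(rewrite Rminus_0_r; lra)). rewrite E'0, Rminus_0_r in Hdel'. exact Hdel'. }
    assert (Hxp : 0 < Rabs xi) by (apply Rabs_pos_lt; auto).
    apply ZL; [lra| split; [lra|lra]|].
    apply (HG' (E' xi) xi); [lra | split; lra | reflexivity].
  - intros Hd0.
    set (c := Re (delta 0) / Derive b 0).
    assert (Hb0 : Derive b 0 <> 0) by lra.
    assert (Hcc : c * Derive b 0 = Re (delta 0)) by (unfold c; field; auto).
    assert (Hc : c <> 0) by (intros Hc0; rewrite Hc0 in Hcc; lra).
    destruct (DerE 0 ltac:(rewrite Rabs_R0; lra)) as [D0 _].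
    rewrite E0 in D0.
    assert (L : - Gx 0 0 / Ge 0 0 = c) by (unfold Gx, Ge, c, d; field; auto).
    rewrite L in D0. apply is_derive_Reals in D0.
    apply is_lim_spec. intros eps.
    assert (Hec : 0 < eps * Rabs c) by (apply Rmult_lt_0_compat; [apply cond_pos | apply Rabs_pos_lt; auto]).
    destruct (D0 _ Hec) as [dl Hdl].
    simpl. exists dl. intros y Hy Hy0.
    assert (Hy' : Rabs y < dl).
    { unfold ball in Hy; simpl in Hy; unfold AbsRing_ball, abs, minus, plus, opp in Hy; simpl in Hy.
      rewrite Ropp_0, Rplus_0_r in Hy. exact Hy. }
    specialize (Hdl y Hy0 Hy'). rewrite Rplus_0_l, E0, Rminus_0_r in Hdl.
    replace (E y / (c*y) - 1) with ((E y / y - c) / c) by (field; auto).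
    rewrite Rabs_div by auto. apply Rlt_div_l; [apply Rabs_pos_lt; auto| exact Hdl].
Qed.
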